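(* Let $B$ be a commutative ring with identity and $A$ a subring of $B$ containing the identity. Then $A$ is a dense subring of $B$ if and only if the map $i^*:\operatorname{spec} B\to\operatorname{spec} A$, $i^*(P)=P\cap A$, is a topological embedding with dense image.
   Context: All rings are commutative with identity; subrings contain the identity. $\operatorname{spec} R$ denotes the set of prime ideals of $R$ with the Zariski topology. A subring $A$ of a ring $B$ is called a dense subring of $B$ if for every ideal $I$ of $B$ and every $b\in B$ with $b\notin \operatorname{rad}(I)$, there exists $a\in B$ with $a\notin \operatorname{rad}(I)$ such that $ab\in A$. *)

(* Defs.v *)
From mathcomp Require Import all_boot all_algebra.
Set Implicit Arguments. Unset Strict Implicit. Unset Printing Implicit Defensive.
Import GRing.Theory.
Local Open Scope ring_scope.

Section Defs.
Variable B : comPzRingType.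

Definition is_subring (A : B -> Prop) : Prop :=
  A 1 /\ (forall x y, A x -> A y -> A (x - y)) /\ (forall x y, A x -> A y -> A (x * y)).

Definition ideal_in (A : B -> Prop) (I : B -> Prop) : Prop :=
  (forall x, I x -> A x) /\ I 0 /\
  (forall x y, I x -> I y -> I (x + y)) /\
  (forall a x, A a -> I x -> I (a * x)).

Definition prime_ideal_in (A : B -> Prop) (P : B -> Prop) : Prop :=
  ideal_in A P /\ ~ P 1 /\
  (forall a b, A a -> A b -> P (a * b) -> P a \/ P b).

Definition fullset : B -> Prop := fun _ => True.

Definition ideal (I : B -> Prop) : Prop := ideal_in fullset I.

Definition rad (I : B -> Prop) : B -> Prop := fun x => exists n : nat, I (x ^+ n).

Definition dense_subring (A : B -> Prop) : Prop :=
  forall (I : B -> Prop) (b : B), ideal I -> ~ rad I b ->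
    exists a : B, ~ rad I a /\ A (a * b).

Definition spec_in (A : B -> Prop) : Type := {P : B -> Prop | prime_ideal_in A P}.

Definition zariski_closed (A : B -> Prop) (C : spec_in A -> Prop) : Prop :=
  exists S : B -> Prop, (forall x, S x -> A x) /\
    forall P : spec_in A, C P <-> (forall x, S x -> proj1_sig P x).

Lemma contraction_prime (A : B -> Prop) (hA : is_subring A) (P : spec_in fullset) :
  prime_ideal_in A (fun x => proj1_sig P x /\ A x).
Proof.
case: P => P [[_ [P0 [PD PM]]] [P1 Pp]] /=.
case: hA => [A1 [AB AM]].
have A0 : A 0 by rewrite -(subrr 1); apply: AB.
have AN : forall x, A x -> A (- x) by move=> x Ax; rewrite -sub0r; apply: AB.
split; [split; [|split; [|split]]|split].
- by move=> x [].
- by [].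
- move=> x y [Px Ax] [Py Ay]; split; first exact: PD.
  by rewrite -[y]opprK; apply: AB => //; apply: AN.
- by move=> a x Aa [Px Ax]; split; [apply: PM | apply: AM].
- by case.
- move=> a b Aa Ab [Pab _]; case: (Pp a b I I Pab) => H; [left|right]; by split.
Qed.

Definition contraction (A : B -> Prop) (hA : is_subring A) (P : spec_in fullset) :
  spec_in A := exist _ _ (contraction_prime hA P).

End Defs.

(* General topology, with topologies described by their closed sets. *)
Section Topo.
Variables (X Y : Type) (cX : (X -> Prop) -> Prop) (cY : (Y -> Prop) -> Prop).

Definition continuous_closed (f : X -> Y) : Prop :=
  forall D, cY D -> cX (fun x => D (f x)).

(* Topological embedding: f is injective, continuous, and X carries the
   topology induced by f (every closed set of X is the preimage of a closed
   set of Y); equivalently f is a homeomorphism onto its image. *)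
Definition top_embedding (f : X -> Y) : Prop :=
  injective f /\ continuous_closed f /\
  forall C, cX C -> exists D, cY D /\ forall x, C x <-> D (f x).

Definition dense_image (f : X -> Y) : Prop :=
  forall D, cY D -> (forall x, D (f x)) -> forall y, D y.
End Topo.

(* Main.v *)
Require Import Defs.
From mathcomp Require Import all_boot all_algebra.
From mathcomp Require Import boolp classical_sets.
From mathcomp Require Import ring.
From Stdlib Require Classical_Prop Classical_Pred_Type.
Import GRing.Theory.
Local Open Scope ring_scope.
Local Open Scope classical_set_scope.

Section Aux.
Variable B : comPzRingType.

Lemma sub_pow {A : B -> Prop} (hA : is_subring A) {s} {n} : A s -> A (s ^+ n).
Proof.
case: hA => [A1 [_ AM]] As; elim: n => [|n IH]; first by rewrite expr0.
by rewrite exprS; apply: AM.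
Qed.

Lemma prime_pow {A P : B -> Prop} (hA : is_subring A) {s} {n} :
  prime_ideal_in A P -> A s -> P (s ^+ n) -> P s.
Proof.
move=> [_ [P1 Pp]] As; elim: n => [|n IH]; first by rewrite expr0.
rewrite exprS => /Pp [] //; last exact: sub_pow.
Qed.

Lemma exists_prime (I : B -> Prop) (x : B) : Defs.ideal I -> ~ Defs.rad I x ->
  exists P : spec_in (@fullset B), (forall y, I y -> proj1_sig P y) /\ ~ proj1_sig P x.
Proof.
move=> hI nrx.
pose good (J : B -> Prop) := [/\ Defs.ideal J, (forall y, I y -> J y) & (forall n, ~ J (x ^+ n))].
pose PP (J : set B) := (forall y, ~ J y) \/ good J.
have gI : good I by split => // n In; apply: nrx; exists n.
have [A [PA maxA]] : exists A, PP A /\ forall C, A `<` C -> ~ PP C.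
  apply: Zorn_bigcup => F FP Ftot.
  have [[X0 FX0 gX0]|nog] := Classical_Prop.classic (exists2 X, F X & good X); last first.
    left => y [X FX Xy]; apply: nog; exists X => //.
    by case: (FP X FX) => // /(_ y).
  have gF X y : F X -> X y -> good X by move=> FX Xy; case: (FP X FX) => // /(_ y).
  right; split.
  - split; first by [].
    case: gX0 => [[_ [X00 _]] _ _].
    split; first by exists X0.
    split.
    + move=> y z [X1 FX1 X1y] [X2 FX2 X2z].
      have [[_ [_ [D1 _]]] _ _] := gF _ _ FX1 X1y.
      have [[_ [_ [D2 _]]] _ _] := gF _ _ FX2 X2z.
      case: (Ftot _ _ FX1 FX2) => S12.
      * by exists X2 => //; apply: D2 => //; apply: S12.
      * by exists X1 => //; apply: D1 => //; apply: S12.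
    + move=> a y _ [X1 FX1 X1y]; exists X1 => //.
      have [[_ [_ [_ M1]]] _ _] := gF _ _ FX1 X1y.
      exact: M1.
  - by move=> y Iy; exists X0 => //; case: gX0 => _ IX0 _; exact: IX0.
  - by move=> n [X FX Xn]; case: (gF _ _ FX Xn) => _ _ /(_ n).
have gA : good A.
  case: PA => // emp; exfalso; apply: (maxA I) => //; [|by right].
  split; first by move=> y /emp.
  by move=> IA; case: hI => _ [I0 _]; apply: (emp 0); apply: IA.
case: gA => [[_ [A0 [AD AM]]] IA Ax].
have pA : prime_ideal_in (@fullset B) A.
  split; first by [].
  split; first by move=> A1; apply: (Ax 0%N); rewrite expr0.
  move=> a b _ _ Aab.
  have ext c : ~ A c -> exists m r z, A z /\ x ^+ m = z + r * c.
    move=> nAc; pose C y := exists r z, A z /\ y = z + r * c.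
    have /not_existsP [m [r [z [Az E]]]] : ~ forall m, ~ C (x ^+ m).
      move=> nC; apply: (maxA C); last first.
        right; split; last by [].
          split; first by [].
          split; first by exists 0, 0; split => //; rewrite mul0r addr0.
          split.
            move=> y1 y2 [r1 [z1 [Az1 ->]]] [r2 [z2 [Az2 ->]]].
            exists (r1 + r2), (z1 + z2); split; first exact: AD.
            by ring.
          move=> a' y _ [r1 [z1 [Az1 ->]]]; exists (a' * r1), (a' * z1); split.
            exact: AM.
          by ring.
        by move=> y Iy; exists 0, y; split; [apply: IA|rewrite mul0r addr0].
      split; first by move=> y Ay; exists 0, y; rewrite mul0r addr0.
      by move=> CA; apply: nAc; apply: CA; exists 1, 0; rewrite add0r mul1r.
    by exists m, r, z.
  have [nAa|] := Classical_Prop.classic (A a); first by left.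
  have [nAb|] := Classical_Prop.classic (A b); first by right.
  move=> /ext [m [r1 [z1 [Az1 E1]]]] /ext [n [r2 [z2 [Az2 E2]]]].
  exfalso; apply: (Ax (m + n)%N).
  have -> : x ^+ (m + n) = x ^+ n * z1 + (r1 * b) * z2 + (r1 * r2) * (a * b).
    by rewrite exprD E1 E2; ring.
  by apply: (AD); [apply: (AD)|]; apply: (AM).
by exists (exist _ A pA); split => //= Ax1; apply: (Ax 1%N); rewrite expr1.
Qed.

Lemma prime_not_rad (P : B -> Prop) s : prime_ideal_in (@fullset B) P -> ~ P s -> ~ Defs.rad P s.
Proof.
move=> pP nPs [n Pn]; apply: nPs.
have fs : is_subring (@fullset B) by [].
exact: (prime_pow fs pP I Pn).
Qed.

Lemma spec_eq (A : B -> Prop) (P Q : spec_in A) :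
  (forall x, proj1_sig P x <-> proj1_sig Q x) -> P = Q.
Proof.
case: P Q => [P pP] [Q pQ] /= H; apply: eq_exist.
by apply: funext => x; apply: propext.
Qed.

End Aux.
Arguments prime_not_rad {B P s}.
Arguments exists_prime {B I x}.
Arguments spec_eq {B A P Q}.
Arguments prime_pow {B A P} hA {s n}.
Arguments sub_pow {B A} hA {s n}.

Theorem corollary4p2 (B : comPzRingType) (A : B -> Prop) (hA : is_subring A) :
  dense_subring A <->
  (top_embedding (@zariski_closed B (@fullset B)) (@zariski_closed B A) (contraction hA) /\
   dense_image (@zariski_closed B A) (contraction hA)).
Proof.
have fullsub : is_subring (@fullset B) by [].
split.
- move=> dA; split; [split; [|split]|].
  +
    have half (P Q : spec_in (@fullset B)) y : contraction hA P = contraction hA Q ->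
        proj1_sig P y -> proj1_sig Q y.
      move=> H Py; have [//|nQy] := Classical_Prop.classic (proj1_sig Q y).
      have pQ := proj2_sig Q.
      have [a [nra Aay]] := dA _ y (proj1 pQ) (prime_not_rad pQ nQy).
      have Pay : proj1_sig P (a * y).
        by case: (proj2_sig P) => [[_ [_ [_ M]]] _]; apply: M.
      have := f_equal (fun S : spec_in A => proj1_sig S (a * y)) H => /= E.
      have : proj1_sig P (a * y) /\ A (a * y) by split.
      rewrite E => -[Qay _].
      case: pQ => _ [_ /(_ a y I I Qay)] [Qa|//].
      by exfalso; apply: nra; exists 1%N; rewrite expr1.
    move=> P Q H; apply: spec_eq => y; split; [exact: half|].
    by apply: half; rewrite H.
  +
    move=> D [S [SA HD]]; exists S; split => // P.
    rewrite (HD (contraction hA P)) /=; split => H x Sx.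
      by case: (H x Sx).
    by split; [apply: H|apply: SA].
  +
    move=> C [S [_ HC]].
    pose S' x := A x /\ forall P : spec_in (@fullset B),
       (forall s, S s -> proj1_sig P s) -> proj1_sig P x.
    exists (fun Q : spec_in A => forall x, S' x -> proj1_sig Q x); split.
      by exists S'; split => // x [].
    move=> P; rewrite HC /=; split.
      by move=> HS x [Ax HP]; split => //; apply: HP.
    move=> HS s Ss; have [//|nPs] := Classical_Prop.classic (proj1_sig P s).
    have pP := proj2_sig P.
    have [a [nra Aas]] := dA _ s (proj1 pP) (prime_not_rad pP nPs).
    have [Pas _] : proj1_sig P (a * s) /\ A (a * s).
      apply: HS; split => // P' HP'.
      by case: (proj2_sig P') => [[_ [_ [_ M]]] _]; apply: M => //; apply: HP'.
    case: pP => _ [_ /(_ a s I I Pas)] [Pa|//].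
    by exfalso; apply: nra; exists 1%N; rewrite expr1.
  +
    move=> D [S [SA HD]] Hall Q; apply/HD => s Ss.
    have allP (P : spec_in (@fullset B)) : proj1_sig P s.
      by have /HD /(_ s Ss) [] := Hall P.
    have [n sn0] : Defs.rad (fun z => z = 0) s.
      apply: Classical_Prop.NNPP => nr.
      have zI : Defs.ideal (fun z : B => z = 0).
        split => //; split => //; split; first by move=> x y -> ->; rewrite addr0.
        by move=> a x _ ->; rewrite mulr0.
      by have [P [_ nPs]] := exists_prime zI nr; apply: nPs.
    have pQ := proj2_sig Q.
    apply: (prime_pow hA (n := n)) pQ (SA _ Ss) _; rewrite sn0.
    by case: (proj2_sig Q) => [[_ [Q0 _]] _].
- move=> [[_ [_ emb]] _] I b hI nrb.
  have [P [IP nPb]] := exists_prime hI nrb.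
  have [D [[S' [S'A HD]] HCD]] :
      exists D, @zariski_closed B A D /\
        forall P : spec_in (@fullset B), proj1_sig P b <-> D (contraction hA P).
    apply: emb; exists (fun x => x = b); split => // P'.
    by split; [move=> Pb x ->|apply].
  have : ~ forall x, S' x -> proj1_sig P x /\ A x.
    by move=> H; apply: nPb; apply/HCD/HD.
  move=> /Classical_Pred_Type.not_all_ex_not [x] H.
  have [S'x nPAx] := Classical_Prop.imply_to_and _ _ H.
  have nPx : ~ proj1_sig P x by move=> Px; apply: nPAx; split => //; apply: S'A.
  have [n [c xnc]] : Defs.rad (fun y => exists c, y = c * b) x.
    apply: Classical_Prop.NNPP => nr.
    have Jid : Defs.ideal (fun y => exists c, y = c * b).
      split => //; split; first by exists 0; rewrite mul0r.
      split; first by move=> y z [c1 ->] [c2 ->]; exists (c1 + c2); rewrite mulrDl.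
      by move=> a y _ [c1 ->]; exists (a * c1); rewrite mulrA.
    have [P' [JP' nP'x]] := exists_prime Jid nr.
    apply: nP'x.
    have : proj1_sig P' b by apply: JP'; exists 1; rewrite mul1r.
    by move=> /HCD /HD /(_ x S'x) [].
  exists c; split; last by rewrite -xnc; apply: sub_pow => //; apply: S'A.
  move=> [k Ick]; apply: nPx.
  have pP : prime_ideal_in (@fullset B) (proj1_sig P) := proj2_sig P.
  have Pc : proj1_sig P c by exact: (prime_pow fullsub pP Logic.I (IP _ Ick)).
  apply: (prime_pow fullsub (n := n) pP Logic.I).
  by rewrite xnc; case: pP => [[_ [_ [_ M]]] _]; rewrite mulrC; apply: M.
Qed.
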